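(* Let $r\ge 3$ be an integer. Every $\mathrm{T}_r$-free $r$-graph $\mathcal{H}$ with $\delta_{r-1}^{+}(\mathcal{H})\ge r$ is $\Sigma_r$-free; that is, there are no three edges $A,B,C\in\mathcal{H}$ with $|A\cap B|=r-1$ and $A\triangle B\subseteq C$.
   Context: An $r$-graph $\mathcal{H}$ is a collection of $r$-subsets (edges) of a finite vertex set $V(\mathcal{H})$. The shadow is $\partial\mathcal{H}=\{e\in\binom{V(\mathcal{H})}{r-1}\colon e\subseteq E \text{ for some } E\in\mathcal{H}\}$. For $e\in\partial\mathcal{H}$, $N_{\mathcal{H}}(e)=\{v\in V(\mathcal{H})\colon e\cup\{v\}\in\mathcal{H}\}$. The minimum positive codegree is $\delta_{r-1}^{+}(\mathcal{H})=\min\{|N_{\mathcal{H}}(e)|\colon e\in\partial\mathcal{H}\}$. The $r$-uniform generalized triangle is $\mathrm{T}_r=\{\{1,\ldots,r-1,r\},\{1,\ldots,r-1,r+1\},\{r,r+1,\ldots,2r-1\}\}$; $\mathcal{H}$ is $\mathrm{T}_r$-free if it contains no subhypergraph isomorphic to $\mathrm{T}_r$. $\Sigma_r$ denotes the family of $r$-graphs consisting of three edges $A,B,C$ with $|A\cap B|=r-1$ and $A\triangle B\subseteq C$ (symmetric difference). *)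

(* Defs.v *)
From mathcomp Require Import all_boot.
Set Implicit Arguments. Unset Strict Implicit. Unset Printing Implicit Defensive.

Definition uniform (T : finType) (r : nat) (H : {set {set T}}) : Prop :=
  forall E, E \in H -> #|E| = r.

Definition shadow (T : finType) (r : nat) (H : {set {set T}}) : {set {set T}} :=
  [set e : {set T} | (#|e| == r.-1) && [exists E in H, e \subset E]].

Definition nbhd (T : finType) (H : {set {set T}}) (e : {set T}) : {set T} :=
  [set v | v |: e \in H].

Definition min_pos_codeg_ge (T : finType) (r : nat) (H : {set {set T}}) (k : nat) : Prop :=
  forall e, e \in shadow r H -> k <= #|nbhd H e|.

(* The generalized triangle T_r on vertex set {0,...,2r-2} (0-indexed):
   E1 = {0,...,r-2} ∪ {r-1}, E2 = {0,...,r-2} ∪ {r}, E3 = {r-1,...,2r-2}. *)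
Definition Tr_edge1 (r : nat) : {set 'I_(2*r-1)} := [set i : 'I_(2*r-1) | i < r].
Definition Tr_edge2 (r : nat) : {set 'I_(2*r-1)} :=
  [set i : 'I_(2*r-1) | (i < r - 1) || (i == r :> nat)].
Definition Tr_edge3 (r : nat) : {set 'I_(2*r-1)} := [set i : 'I_(2*r-1) | r - 1 <= i].

Definition Tr_free (T : finType) (r : nat) (H : {set {set T}}) : Prop :=
  ~ exists f : 'I_(2*r-1) -> T,
      [/\ injective f, f @: Tr_edge1 r \in H, f @: Tr_edge2 r \in H
        & f @: Tr_edge3 r \in H].

Definition Sigma_free (T : finType) (r : nat) (H : {set {set T}}) : Prop :=
  ~ exists A B C, [/\ A \in H, B \in H, C \in H,
      #|A :&: B| = r.-1 & (A :\: B) :|: (B :\: A) \subset C].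

(* Main.v *)
Require Import Defs.
From mathcomp Require Import all_boot.
From mathcomp Require Import zify.

Lemma img_char (T:finType) (L: seq T) (x0:T) n (P : nat -> bool)
  (Hn : size L = n) (U: uniq L) x :
  (x \in (fun i : 'I_n => nth x0 L i) @: [set i : 'I_n | P i]) =
  (x \in L) && P (index x L).
Proof.
apply/imsetP/andP.
- case=> i; rewrite inE => Pi ->. rewrite mem_nth ?Hn //. by rewrite index_uniq ?Hn.
- case=> xL Px. have hi : index x L < n by rewrite -Hn index_mem.
  exists (Ordinal hi); rewrite ?inE //=. by rewrite nth_index.
Qed.

Lemma step r (T : finType) (H : {set {set T}}) (a b : T) (S : {set T}) :
  uniform r H -> min_pos_codeg_ge r H r -> #|S| = r.-1 -> a \notin S -> b \notin S ->
  1 <= r ->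
  forall n C, C \in H -> a \in C -> b \in C -> #|C :&: S| <= n ->
  exists C', [/\ C' \in H, a \in C', b \in C' & [disjoint C' & S]].
Proof.
move=> unif cod cS aS bS r1.
elim=> [|n IH] C HC aC bC hn.
  exists C; split => //. by rewrite -setI_eq0 -cards_eq0 -leqn0.
case: (set_0Vmem (C :&: S)) => [E|[x xCS]].
  by exists C; split => //; rewrite -setI_eq0 E.
move: (xCS); rewrite inE => /andP[xC xS].
set D := C :\ x.
have cD : #|D| = r.-1.
  have := cardsD1 x C. rewrite xC (unif _ HC). rewrite /D => h; clear -h r1; lia.
have Dsh : D \in shadow r H.
  rewrite inE cD ?eqxx /=; apply/existsP; exists C; by rewrite HC subD1set.
have cN := cod D Dsh.
have [v vN vS] : exists2 v, v \in nbhd H D & v \notin S.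
  case: (boolP (nbhd H D \subset S)) => [sub|/subsetPn //].
  have := subset_leq_card sub => h; clear -h cN cS r1; lia.
have vD : v |: D \in H by move: vN; rewrite inE.
have vnD : v \notin D.
  have := unif _ vD; rewrite cardsU1 cD. case: (v \in D) => //= h; clear -h r1; lia.
apply: (IH (v |: D)) => //.
- rewrite !inE aC andbT orbC; apply/orP; left. apply: contraNneq aS => ->. done.
- rewrite !inE bC andbT orbC; apply/orP; left. apply: contraNneq bS => ->. done.
- have : (v |: D) :&: S \proper C :&: S.
    apply/properP; split.
      apply/subsetP => y; rewrite !inE => /andP[/orP[/eqP->|/andP[_ yC]] yS].
        by rewrite yS in vS.
      by rewrite yC yS.
    exists x => //. rewrite !inE ?eqxx /= xS andbT orbF. by apply: contraNneq vS => <-.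
  move/proper_card => h; rewrite -ltnS; exact: leq_trans h hn.
Qed.

Ltac ar := first [ lia | (apply/negbTE; lia) | (apply/idP; lia) ].

Theorem proposition2p1 (r : nat) (T : finType) (H : {set {set T}}) :
  3 <= r -> uniform r H -> Tr_free r H -> min_pos_codeg_ge r H r ->
  Sigma_free r H.
Proof.
move=> r3 unif trf cod [A [B [C [HA HB HC HAB HsubC]]]].
set S := A :&: B. have HS : #|S| = r.-1 by [].
have cA := unif _ HA. have cB := unif _ HB.
have [a Ea] : exists a, A :\: B = [set a].
  apply/cards1P. have := cardsID B A. rewrite HAB cA => h; clear -h r3; lia.
have [b Eb] : exists b, B :\: A = [set b].
  apply/cards1P. have := cardsID A B. rewrite setIC HAB cB => h; clear -h r3; lia.
have aA : a \in A by have := set11 a; rewrite -Ea inE => /andP[].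
have aB : a \notin B by have := set11 a; rewrite -Ea inE => /andP[].
have bB : b \in B by have := set11 b; rewrite -Eb inE => /andP[].
have bA : b \notin A by have := set11 b; rewrite -Eb inE => /andP[].
have aS : a \notin S by rewrite /S inE (negbTE aB) andbF.
have bS : b \notin S by rewrite /S inE (negbTE bA).
have aC : a \in C by apply: (subsetP HsubC); rewrite inE Ea set11.
have bC : b \in C by apply: (subsetP HsubC); rewrite inE Eb set11 orbT.
have [C' [HC' aC' bC' dC']] :=
  @step r T H a b S unif cod HS aS bS (ltnW (ltnW r3)) _ C HC aC bC (leqnn _).
have ab : a != b by apply: contraNneq aB => ->.
set R := C' :\: [set a; b].
have cC' := unif _ HC'.
have CI : C' :&: [set a; b] = [set a; b].
  apply/setIidPr/subsetP => y; rewrite !inE => /orP[]/eqP->//.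
have cR : #|R| = r - 2.
  have := cardsID [set a; b] C'. rewrite cC' CI.
  rewrite (cards2 a b) ab => <-. by rewrite addKn.
have eA : A = S :|: [set a] by rewrite -Ea /S setID.
have eB : B = S :|: [set b] by rewrite -Eb /S setIC setID.
have eC : C' = [set a; b] :|: R by rewrite /R -{1}CI setID.
pose L := enum S ++ a :: b :: enum R.
have aR : a \notin R by rewrite !inE ?eqxx.
have bR : b \notin R by rewrite !inE ?eqxx orbT.
have SR : forall y, y \in S -> y \notin R.
  move=> y yS; apply/negP => yR. move: dC'; rewrite -setI_eq0 => /eqP E.
  have : y \in C' :&: S by move: yR; rewrite in_setD => /andP[_ yC']; rewrite in_setI yC' yS.
  by rewrite E inE.
have memL : forall y, (y \in L) = [|| y \in S, y == a, y == b | y \in R].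
  by move=> y; rewrite /L mem_cat mem_enum !in_cons mem_enum.
have uL : uniq L.
  rewrite /L cat_uniq enum_uniq; apply/and3P; split => //.
  - apply/hasPn => y; rewrite !in_cons mem_enum => /orP[/eqP->|/orP[/eqP->|yR]];
      rewrite mem_enum //.
    apply/negP => yS; by move: (SR y yS); rewrite yR.
  - by rewrite /= in_cons mem_enum negb_or ab aR mem_enum bR enum_uniq.
have sL : size L = 2 * r - 1.
  rewrite /L size_cat /= -!cardE HS cR. clear -r3; lia.
have iS : forall y, y \in S -> index y L < r - 1.
  move=> y yS; rewrite /L index_cat mem_enum yS.
  have := index_mem y (enum S); rewrite mem_enum yS -cardE HS subn1 => //.
have ia : index a L = r - 1.
  by rewrite /L index_cat mem_enum ?(negbTE aS) /= ?eqxx -cardE HS addn0 subn1.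
have ib : index b L = r.
  rewrite /L index_cat mem_enum ?(negbTE bS) /= ?(negbTE ab) ?eqxx -cardE HS.
  clear -r3; lia.
have iR : forall y, y \in R -> r < index y L.
  move=> y yR. have yS : y \notin S by apply: contraTN yR => /SR.
  have ya : (a == y) = false by apply/negbTE; apply: contraNneq aR => ->.
  have yb : (b == y) = false by apply/negbTE; apply: contraNneq bR => ->.
  rewrite /L index_cat mem_enum (negbTE yS) /= ya yb -cardE HS.
  clear -r3; lia.
have ba : (b == a) = false by rewrite eq_sym; exact: negbTE.
pose f := fun i : 'I_(2 * r - 1) => nth a L i.
apply: trf; exists f; split.
- move=> i j /eqP; rewrite /f nth_uniq ?sL ?ltn_ord // => /eqP; exact: val_inj.
- suff -> : f @: Tr_edge1 r = A by [].
  apply/setP => y; rewrite (@img_char T L a _ (fun i => i < r) sL uL) eA memL in_setU in_set1.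
  case: (eqVneq y a) => [->|ya].
    by rewrite ?(negbTE aS) ?eqxx /= ?orbT ?orbF ia; clear -r3; ar.
  rewrite /= ?(negbTE ya) /=; case: (eqVneq y b) => [->|yb].
    by rewrite ?(negbTE bS) ?ba /= ?orbT ?orbF ib; clear -r3; ar.
  rewrite /= ?(negbTE yb) /=; case: (boolP (y \in S)) => yS /=.
    move: (iS y yS); move: (index y L) => k h; clear -h r3; ar.
  case: (boolP (y \in R)) => yR //=.
  move: (iR y yR); move: (index y L) => k h; clear -h r3; ar.
- suff -> : f @: Tr_edge2 r = B by [].
  apply/setP => y; rewrite (@img_char T L a _ (fun i => (i < r - 1) || (i == r)) sL uL) eB memL in_setU in_set1.
  case: (eqVneq y a) => [->|ya].
    by rewrite ?(negbTE aS) ?(negbTE ab) /= ?orbT ?orbF ia; clear -r3; ar.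
  rewrite /= ?(negbTE ya) /=; case: (eqVneq y b) => [->|yb].
    by rewrite ?(negbTE bS) ?eqxx /= ?orbT ?orbF ib; clear -r3; ar.
  rewrite /= ?(negbTE yb) /=; case: (boolP (y \in S)) => yS /=.
    move: (iS y yS); move: (index y L) => k h; clear -h r3; ar.
  case: (boolP (y \in R)) => yR //=.
  move: (iR y yR); move: (index y L) => k h; clear -h r3; ar.
- suff -> : f @: Tr_edge3 r = C' by [].
  apply/setP => y; rewrite (@img_char T L a _ (fun i => r - 1 <= i) sL uL) eC memL in_setU in_set2.
  case: (eqVneq y a) => [->|ya].
    by rewrite ?(negbTE aS) ?eqxx /= ?orbT ?orbF ia; clear -r3; ar.
  rewrite /= ?(negbTE ya) /=; case: (eqVneq y b) => [->|yb].
    by rewrite ?(negbTE bS) ?eqxx /= ?orbT ?orbF ib; clear -r3; ar.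
  rewrite /= ?(negbTE yb) /=; case: (boolP (y \in S)) => yS /=.
    rewrite ?(negbTE (SR y yS)).
    move: (iS y yS); move: (index y L) => k h; clear -h r3; ar.
  case: (boolP (y \in R)) => yR //=.
  move: (iR y yR); move: (index y L) => k h; clear -h r3; ar.
Qed.
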